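(* Let $n\ge 1$ and let $P$ be a reachable position of $\mathrm{AGG}(n,A)$ containing at least one tile. Then there exist a nonempty cell $c$ of $P$, whose tile in $P$ has some value $v$, and a sequence of steps reaching $P$ from the initial position of the following form: first, a sequence of steps reaching the position $P'$ in which cell $c$ holds a tile of value $v$ and the other $n-1$ cells are empty; then a sequence of steps that never changes cell $c$ and uses only the other $n-1$ cells, forming a legal play of $\mathrm{AGG}(n-1,A)$ on those cells from its initial (all-empty) position, and reaching the position of $\mathrm{AGG}(n-1,A)$ obtained from $P$ by deleting cell $c$.
   Context: Let $A$ be a set of positive integers with $1\in A$ (the allowed tile values). For an integer $n\ge 0$, the abstract generalized 2048 game $\mathrm{AGG}(n,A)$ is played on $n$ indistinguishable cells. A position assigns to each cell either nothing (the cell is empty) or a tile carrying a value in $A$. The initial position has all cells empty. A step, which can be performed from any position having at least one empty cell, consists of: (i) placing a new tile of value $1$ into a chosen empty cell; then (ii) optionally choosing any collection of pairwise disjoint sets of nonempty cells such that the sum of the tile values in each chosen set belongs to $A$, and merging each chosen set into a single tile, whose value is that sum, placed in one cell of the set, the other cells of the set becoming empty. The game ends when, after a step, all cells are nonempty (no further step is then possible). A position is reachable if it can be obtained from the initial position by a finite sequence of steps. *)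

(* Defs.v *)
From mathcomp Require Import all_boot.
Set Implicit Arguments. Unset Strict Implicit. Unset Printing Implicit Defensive.

(* A position of AGG(n,A): each cell 'I_n is empty (None) or holds a tile
   with value v (Some v). *)
Definition position (n : nat) := {ffun 'I_n -> option nat}.

Definition init_pos (n : nat) : position n := [ffun _ => None].

Definition tval (o : option nat) : nat := if o is Some v then v else 0.

Definition set_sum n (Q : position n) (S : {set 'I_n}) : nat :=
  \sum_(x in S) tval (Q x).

Definition place n (P : position n) (e : 'I_n) : position n :=
  [ffun i => if i == e then Some 1 else P i].

(* One step of AGG(n,A) from P to R: place a 1 into an empty cell e, then
   merge a collection [ms] of pairwise disjoint nonempty sets of nonempty
   cells (each given with the cell m.2 in m.1 receiving the merged tile),
   the sum of the values of each set belonging to A. *)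
Definition step n (A : nat -> Prop) (P R : position n) : Prop :=
  exists e : 'I_n, P e = None /\
  exists ms : seq ({set 'I_n} * 'I_n),
    let Q := place P e in
    (forall m, m \in ms ->
        [/\ m.2 \in m.1,
            (forall x, x \in m.1 -> Q x <> None) &
            A (set_sum Q m.1)]) /\
    (forall i j, i < size ms -> j < size ms -> i <> j ->
        [disjoint (nth (set0, e) ms i).1 & (nth (set0, e) ms j).1]) /\
    (forall x : 'I_n,
        (forall m, m \in ms -> x \in m.1 ->
            R x = (if x == m.2 then Some (set_sum Q m.1) else None)) /\
        ((forall m, m \in ms -> x \notin m.1) -> R x = Q x)).

Definition reaches n (A : nat -> Prop) (P Q : position n) : Prop :=
  exists (k : nat) (f : nat -> position n),
    [/\ f 0 = P, f k = Q & forall i, i < k -> step A (f i) (f i.+1)].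

Definition reachable n (A : nat -> Prop) (P : position n) : Prop :=
  reaches A (init_pos n) P.

Definition insert_cell m (c : 'I_m.+1) (v : nat) (Q : position m)
  : position m.+1 :=
  [ffun i => if unlift c i is Some j then Q j else Some v].

Definition delete_cell m (c : 'I_m.+1) (P : position m.+1) : position m :=
  [ffun j => P (lift c j)].

(* Main.v *)
Require Import Defs.
From mathcomp Require Import all_boot zify.
Import Defs.
Set Implicit Arguments. Unset Strict Implicit. Unset Printing Implicit Defensive.


Lemma reaches_refl n (A : nat -> Prop) (X : position n) : reaches A X X.
Proof. by exists 0, (fun _ => X); split. Qed.

Lemma reaches_step_r n (A : nat -> Prop) (X Y Z : position n) :
  reaches A X Y -> step A Y Z -> reaches A X Z.
Proof.
case=> k [f [f0 fk fs]] sYZ.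
exists k.+1, (fun i => if i <= k then f i else Z); split => //.
- by rewrite ltnn.
move=> i; rewrite ltnS => ik; case: (ltngtP i k) => [lt|gt|->].
- by apply: fs.
- by move: (leq_trans gt ik); rewrite ltnn.
by rewrite fk.
Qed.

Lemma reaches_trans n (A : nat -> Prop) (X Y Z : position n) :
  reaches A X Y -> reaches A Y Z -> reaches A X Z.
Proof.
move=> hXY [k [f [f0 fk fs]]]; rewrite -fk.
have: k <= k by [].
elim: {1 3}k => [|j IH] jk; first by rewrite f0.
apply: reaches_step_r (IH (ltnW jk)) _; exact: fs.
Qed.

Lemma reaches_last n (A : nat -> Prop) (X Y : position n) :
  reaches A X Y -> X <> Y -> exists Y', reaches A X Y' /\ step A Y' Y.
Proof.
case=> [[|k]] [f [f0 fk fs]] XY; first by rewrite -f0 -fk in XY.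
exists (f k); split; last by rewrite -fk; apply: fs.
by exists k, f; split => // i ik; apply: fs; rewrite ltnS ltnW.
Qed.

Lemma step_reaches n (A : nat -> Prop) (X Y : position n) :
  step A X Y -> reaches A X Y.
Proof. by move=> s; apply: reaches_step_r (reaches_refl _ _) s. Qed.


Definition ndisj n (ms : seq ({set 'I_n} * 'I_n)) (e : 'I_n) :=
  forall i j, i < size ms -> j < size ms -> i <> j ->
    [disjoint (nth (set0, e) ms i).1 & (nth (set0, e) ms j).1].

Definition owner n (ms : seq ({set 'I_n} * 'I_n)) (x : 'I_n) : 'I_n :=
  if has (fun m : {set 'I_n} * 'I_n => x \in m.1) ms
  then (nth (set0, x) ms (find (fun m : {set 'I_n} * 'I_n => x \in m.1) ms)).2
  else x.

Lemma stepP n (A : nat -> Prop) (P R : position n) : step A P R ->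
  exists (e : 'I_n) (ms : seq ({set 'I_n} * 'I_n)), [/\ P e = None,
    (forall m, m \in ms -> [/\ m.2 \in m.1,
        (forall x, x \in m.1 -> place P e x <> None) &
        A (set_sum (place P e) m.1)]),
    ndisj ms e,
    (forall x m, m \in ms -> x \in m.1 ->
        R x = (if x == m.2 then Some (set_sum (place P e) m.1) else None)) &
    (forall x, (forall m, m \in ms -> x \notin m.1) -> R x = place P e x)].
Proof.
case=> e [He [ms [H1 [H2 H3]]]].
exists e, ms; split => //.
- by move=> x m mm xm; case: (H3 x) => h _; apply: h.
- by move=> x h; case: (H3 x) => _ h'; apply: h'.
Qed.

Lemma mydisjP (T : finType) (X Y : {set T}) :
  (forall x, x \in X -> x \in Y -> False) -> [disjoint X & Y].
Proof.
move=> h; rewrite disjoint_subset; apply/subsetP => x xX.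
by rewrite !inE; apply/negP => xY; apply: h xX xY.
Qed.

Lemma ms_uniq_mem n (ms : seq ({set 'I_n} * 'I_n)) e m m' x :
  ndisj ms e -> m \in ms -> m' \in ms -> x \in m.1 -> x \in m'.1 -> m = m'.
Proof.
move=> D mm mm' xm xm'.
have i1 : index m ms < size ms by rewrite index_mem.
have i2 : index m' ms < size ms by rewrite index_mem.
case: (eqVneq (index m ms) (index m' ms)) => [eqi|nei].
  by rewrite -(nth_index (set0, e) mm) -(nth_index (set0, e) mm') eqi.
have := D _ _ i1 i2 (elimN eqP nei).
rewrite !nth_index // => h.
by move: (disjointFr h xm); rewrite xm'.
Qed.

Definition stepD n (A : nat -> Prop) (P R : position n) (e : 'I_n)
    (ms : seq ({set 'I_n} * 'I_n)) :=
  [/\ P e = None,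
    (forall m, m \in ms -> [/\ m.2 \in m.1,
        (forall x, x \in m.1 -> place P e x <> None) &
        A (set_sum (place P e) m.1)]),
    ndisj ms e,
    (forall x m, m \in ms -> x \in m.1 ->
        R x = (if x == m.2 then Some (set_sum (place P e) m.1) else None)) &
    (forall x, (forall m, m \in ms -> x \notin m.1) -> R x = place P e x)].

Lemma stepDP n (A : nat -> Prop) (P R : position n) :
  step A P R <-> exists e ms, stepD A P R e ms.
Proof.
split; first exact: stepP.
case=> e [ms [H1 H2 H3 H4 H5]]; exists e; split => //; exists ms; split => //.
split => // x; split; first by move=> m mm xm; apply: H4.
exact: H5.
Qed.

Lemma owner_in n (ms : seq ({set 'I_n} * 'I_n)) e m x :
  ndisj ms e -> m \in ms -> x \in m.1 -> owner ms x = m.2.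
Proof.
move=> D mm xm.
have hh : has (fun m : {set 'I_n} * 'I_n => x \in m.1) ms by apply/hasP; exists m.
rewrite /owner hh.
set m0 := nth _ _ _.
have m0in : m0 \in ms by rewrite mem_nth // -has_find.
have xm0 : x \in m0.1 := nth_find _ hh.
by rewrite (ms_uniq_mem D m0in mm xm0 xm).
Qed.

Lemma owner_out n (ms : seq ({set 'I_n} * 'I_n)) x :
  (forall m, m \in ms -> x \notin m.1) -> owner ms x = x.
Proof.
move=> h; rewrite /owner; case: hasP => // [[m mm xm]].
by move: (h m mm); rewrite xm.
Qed.

Lemma owner_cases n (ms : seq ({set 'I_n} * 'I_n)) e y :
  ndisj ms e ->
  (exists2 m, m \in ms & y \in m.1 /\ owner ms y = m.2) \/
  ((forall m, m \in ms -> y \notin m.1) /\ owner ms y = y).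
Proof.
move=> D; case: (boolP (has (fun m : {set 'I_n} * 'I_n => y \in m.1) ms)).
  by case/hasP => m mm ym; left; exists m => //; split => //; apply: owner_in D mm ym.
move=> nh.
have h : forall m, m \in ms -> y \notin m.1.
  by move=> m mm; apply/negP => ym; apply: (negP nh); apply/hasP; exists m.
by right; split => //; apply: owner_out.
Qed.


Lemma stepD_owner n (A : nat -> Prop) (P R : position n) e ms x :
  stepD A P R e ms -> R x <> None -> owner ms x = x.
Proof.
case=> H1 H2 D H4 H5 Rx.
case: (owner_cases x D) => [[m mm [xm ->]]|[_ ->]] //.
move: Rx; rewrite (H4 x m mm xm); case: eqP => // ->.
Qed.

Lemma stepD_nonempty n (A : nat -> Prop) (P R : position n) e ms x :
  stepD A P R e ms -> R x <> None -> place P e x <> None.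
Proof.
case=> H1 H2 D H4 H5 Rx.
case: (owner_cases x D) => [[m mm [xm _]]|[h _]].
  by case: (H2 m mm) => _ h _; apply: h.
by rewrite -(H5 x h).
Qed.

Lemma stepD_fiber n (A : nat -> Prop) (P R : position n) e ms x :
  stepD A P R e ms ->
  tval (R x) = \sum_(y | owner ms y == x) tval (place P e y).
Proof.
case=> H1 H2 D H4 H5.
case: (owner_cases x D) => [[m mm [xm _]]|[h _]].
  rewrite (H4 x m mm xm); case: eqP => [xe|xne] /=.
    rewrite /set_sum; apply: eq_bigl => y.
    case: (owner_cases y D) => [[m' mm' [ym' ->]]|[hy ->]].
      apply/idP/idP => [ym|/eqP e'].
        by rewrite xe (ms_uniq_mem D mm mm' ym ym').
      have xm' : x \in m'.1 by rewrite -e'; case: (H2 m' mm').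
      by rewrite (ms_uniq_mem D mm' mm xm' xm) in ym'.
    apply/idP/idP => [ym|/eqP ->//].
    by move: (hy m mm); rewrite ym.
  rewrite big_pred0 // => y.
  case: (owner_cases y D) => [[m' mm' [ym' ->]]|[hy ->]].
    apply/eqP => e'.
    have xm' : x \in m'.1 by rewrite -e'; case: (H2 m' mm').
    by apply: xne; rewrite -e' (ms_uniq_mem D mm' mm xm' xm).
  by apply/eqP => yx; move: (hy m mm); rewrite yx xm.
rewrite (H5 x h) (big_pred1 x) // => y /=.
case: (owner_cases y D) => [[m' mm' [ym' ->]]|[hy ->]] //.
apply/eqP/eqP => [e'|yx]; last by rewrite -yx in h; move: (h m' mm'); rewrite ym'.
have xm' : x \in m'.1 by rewrite -e'; case: (H2 m' mm').
by move: (h m' mm'); rewrite xm'.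
Qed.


Lemma ndisj_of n (ms : seq ({set 'I_n} * 'I_n)) e :
  uniq ms ->
  (forall m m', m \in ms -> m' \in ms -> m <> m' -> [disjoint m.1 & m'.1]) ->
  ndisj ms e.
Proof.
move=> u h i j il jl ij; apply: h; try exact: mem_nth.
by apply/eqP; rewrite nth_uniq //; apply/eqP.
Qed.

Lemma ndisj_uniq n (ms : seq ({set 'I_n} * 'I_n)) e :
  ndisj ms e -> (forall m, m \in ms -> m.2 \in m.1) -> uniq ms.
Proof.
move=> D hin; apply/(uniqP (set0, e)) => i j il jl eqij.
apply/eqP; apply/negP => /negP /eqP ij.
have := D i j il jl ij; rewrite eqij => dj.
have hh := hin _ (mem_nth (set0, e) jl).
by move: (disjointFr dj hh); rewrite hh.
Qed.

Lemma ndisj_pair n (ms : seq ({set 'I_n} * 'I_n)) e m m' :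
  ndisj ms e -> m \in ms -> m' \in ms -> m <> m' -> [disjoint m.1 & m'.1].
Proof.
move=> D mm mm' ne.
have := D (index m ms) (index m' ms); rewrite !index_mem !nth_index //.
apply => //; move=> ei; apply: ne.
by rewrite -(nth_index (set0, e) mm) ei nth_index.
Qed.

Definition mergeG n (Q : position n) (G : {set 'I_n}) (g : 'I_n) : position n :=
  [ffun x => if x \in G then (if x == g then Some (set_sum Q G) else None)
             else Q x].

Lemma stepD_sumH n (A : nat -> Prop) (P R : position n) e ms (G : {set 'I_n}) :
  stepD A P R e ms ->
  set_sum (place P e) [set y | owner ms y \in G] = set_sum R G.
Proof.
move=> sD; rewrite /set_sum.
rewrite (eq_bigl (fun y => owner ms y \in G)); last by move=> y; rewrite inE.
rewrite (partition_big (owner ms) (mem G)) //=.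
apply: eq_bigr => j jG; rewrite (stepD_fiber j sD); apply: eq_bigl => y.
by case: eqP => [->|]; rewrite ?jG ?andbF.
Qed.

Lemma stepD_merge n (A : nat -> Prop) (P R : position n) e ms
    (G : {set 'I_n}) (g : 'I_n) :
  stepD A P R e ms -> (forall x, x \in G -> R x <> None) -> g \in G ->
  A (set_sum R G) -> step A P (mergeG R G g).
Proof.
move=> sD hG gG hA.
have sD' := sD; case: sD' => H1 H2 D H4 H5.
have hin : forall m, m \in ms -> m.2 \in m.1 by move=> m mm; case: (H2 m mm).
set H := [set y | owner ms y \in G].
set ms2 := (H, g) :: [seq m <- ms | m.2 \notin G].
have ownG : forall x, x \in G -> owner ms x = x.
  by move=> x xG; apply: (stepD_owner sD); apply: hG.
apply/stepDP; exists e, ms2; split => //.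
- move=> m; rewrite inE => /orP [/eqP ->|]; last first.
    by rewrite mem_filter => /andP [_ mm]; apply: H2.
  split => /=.
  + by rewrite inE ownG.
  + move=> x; rewrite inE => ox.
    case: (owner_cases x D) => [[m' mm' [xm' _]]|[_ ox']].
      by case: (H2 m' mm') => _ h _; apply: h.
    by apply: (stepD_nonempty sD); apply: hG; rewrite -ox'.
  + by rewrite (stepD_sumH _ sD).
- apply: ndisj_of.
    rewrite /= filter_uniq ?(ndisj_uniq D hin) // andbT mem_filter /= gG.
    by [].
  have key : forall m', m' \in [seq m <- ms | m.2 \notin G] -> [disjoint H & m'.1].
    move=> m'; rewrite mem_filter => /andP [m'G mm']; apply: mydisjP => y.
    rewrite inE => yH ym'.
    by rewrite (owner_in D mm' ym') (negbTE m'G) in yH.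
  move=> m m'; rewrite !inE => /orP [/eqP ->|mm] /orP [/eqP ->|mm'] //.
  + by move=> _; apply: key.
  + by move=> _; rewrite disjoint_sym; apply: key.
  + move: mm mm'; rewrite !mem_filter => /andP [_ mm] /andP [_ mm'].
    exact: ndisj_pair D mm mm'.
- move=> x m; rewrite inE => /orP [/eqP ->|] /=; last first.
    rewrite mem_filter => /andP [m2G mm] xm.
    rewrite ffunE; case: ifP => [xG|_]; last exact: H4.
    by move: m2G; rewrite -(owner_in D mm xm) ownG // xG.
  rewrite inE => ox; rewrite ffunE; case: ifP => [xG|xG].
    by case: eqP => // _; rewrite (stepD_sumH _ sD).
  have -> : (x == g) = false by apply/negP => /eqP xg; rewrite xg gG in xG.
  case: (owner_cases x D) => [[m' mm' [xm' om]]|[_ ox']]; last first.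
    by rewrite ox' xG in ox.
  rewrite (H4 x m' mm' xm'); case: eqP => // xe.
  by rewrite om -xe xG in ox.
- move=> x hx; rewrite ffunE.
  have xH : x \notin H by have := hx (H, g); rewrite inE eqxx; apply.
  have xG : (x \in G) = false.
    by apply/negP => xG; move: xH; rewrite inE ownG // xG.
  rewrite xG; apply: H5 => m mm; apply/negP => xm.
  case: (boolP (m.2 \in G)) => m2G.
    by move: xH; rewrite inE (owner_in D mm xm) m2G.
  by move: (hx m); rewrite inE mem_filter m2G mm orbT xm => /(_ isT).
Qed.


Lemma reaches_merge n (A : nat -> Prop) (X Q : position n) (G : {set 'I_n}) g :
  reaches A X Q -> X <> Q -> (forall x, x \in G -> Q x <> None) -> g \in G ->
  A (set_sum Q G) -> reaches A X (mergeG Q G g).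
Proof.
move=> r XQ hG gG hA; case: (reaches_last r XQ) => Y [rY sY].
case: (stepP sY) => e [ms sD].
by apply: reaches_step_r rY _; apply: stepD_merge sD hG gG hA.
Qed.

Definition setp n (B : position n) (d : 'I_n) (v : nat) : position n :=
  [ffun x => if x == d then Some v else B x].

Definition nfree n (B : position n) := #|[set x | B x == None]|.

Definition sreach (A : nat -> Prop) (k v : nat) :=
  forall K (B : position K) (d : 'I_K), B d = None -> k <= nfree B ->
    reaches A B (setp B d v).

Lemma step_place n (A : nat -> Prop) (B : position n) d :
  B d = None -> step A B (setp B d 1).
Proof.
move=> Bd; apply/stepDP; exists d, [::]; split => //.
Qed.

Lemma sreach_one (A : nat -> Prop) k : 0 < k -> sreach A k 1.
Proof. by move=> k0 K B d Bd _; apply: step_reaches; apply: step_place. Qed.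

Lemma sreach_mono (A : nat -> Prop) k k' v : k <= k' -> sreach A k v -> sreach A k' v.
Proof. by move=> kk s K B d Bd f; apply: s => //; apply: leq_trans kk f. Qed.

Definition built n (B W : position n) (G : {set 'I_n}) :=
  [/\ forall z, z \in G -> B z = None,
      forall z, z \notin G -> W z = B z &
      forall z, z \in G -> W z <> None].

Lemma built0 n (B : position n) : built B B set0.
Proof. by split => // z; rewrite inE. Qed.

Lemma built_add n (B W : position n) G d w :
  built B W G -> W d = None ->
  [/\ built B (setp W d w) (d |: G), d \notin G &
      set_sum (setp W d w) (d |: G) = w + set_sum W G].
Proof.
case=> h1 h2 h3 Wd.
have dG : d \notin G by apply/negP => dG; apply: (h3 d dG).
split => //.
- split.
  + move=> z; rewrite !inE => /orP [/eqP ->|]; last exact: h1.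
    by rewrite -(h2 d dG).
  + move=> z; rewrite !inE negb_or => /andP [zd zG].
    by rewrite ffunE (negbTE zd) h2.
  + move=> z; rewrite !inE ffunE => /orP [/eqP ->|zG]; first by rewrite eqxx.
    by case: eqP => // _; apply: h3.
- rewrite /set_sum big_setU1 //= ffunE eqxx /=; congr (_ + _).
  apply: eq_bigr => z zG; rewrite ffunE; case: eqP => // zd.
  by rewrite -zd zG in dG.
Qed.

Lemma built_free n (B W : position n) G :
  built B W G -> nfree B <= nfree W + #|G|.
Proof.
case=> h1 h2 h3; rewrite /nfree.
apply: leq_trans (leq_card_setU _ _); apply: subset_leq_card.
apply/subsetP => z; rewrite !inE => /eqP Bz.
case: (boolP (z \in G)) => zG; first by rewrite orbT.
by rewrite h2 // Bz eqxx.
Qed.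

Lemma free_cell n (W : position n) : 0 < nfree W -> exists d, W d = None.
Proof.
rewrite /nfree card_gt0 => /set0Pn [d]; rewrite inE => /eqP; by exists d.
Qed.

Lemma card_levels n (Z : {set 'I_n}) (f : 'I_n -> nat) a b :
  {in Z &, injective f} -> (forall z, z \in Z -> a <= f z < b) -> #|Z| <= b - a.
Proof.
move=> inj hb.
rewrite cardE -(size_map f).
have u : uniq (map f (enum Z)).
  by rewrite map_inj_in_uniq ?enum_uniq // => x y; rewrite !mem_enum; apply: inj.
rewrite -(size_iota a (b - a)); apply: uniq_leq_size u _ => i /mapP [z].
rewrite mem_enum => zZ ->; rewrite mem_iota.
case/andP: (hb z zZ) => h1 h2; rewrite h1 subnKC //.
by apply: leq_trans h1 (ltnW h2).
Qed.

Lemma finish_merge (A : nat -> Prop) n (B W : position n) G d v :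
  reaches A B W -> W <> B -> built B W G -> d \in G ->
  set_sum W G = v -> A v -> reaches A B (setp B d v).
Proof.
move=> r WB bt dG sv hA.
case: (bt) => h1 h2 h3.
have -> : setp B d v = mergeG W G d.
  apply/ffunP => z; rewrite !ffunE.
  case: (boolP (z \in G)) => zG.
    by case: eqP => _; [rewrite sv | rewrite h1].
  rewrite h2 //; case: eqP => // zd; by rewrite zd dG in zG.
apply: reaches_merge => //; first by move=> e; apply: WB.
by rewrite sv.
Qed.


Lemma sum_place K (P : position K) e (S : {set 'I_K}) : P e = None ->
  \sum_(y in S) tval (place P e y) =
  (e \in S) + \sum_(y in [set y in S | P y != None]) tval (P y).
Proof.
move=> Pe.
have h : forall y, tval (place P e y) = (y == e) + tval (P y).
  by move=> y; rewrite ffunE; case: eqP => [->|]; rewrite ?Pe.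
rewrite (eq_bigr _ (fun y _ => h y)) big_split /=; congr (_ + _).
  case: (boolP (e \in S)) => eS.
    rewrite (bigD1 e) //= eqxx big1 // => y /andP [_ ye].
    by rewrite (negbTE ye).
  rewrite big1 // => y yS; case: eqP => // ye.
  by rewrite -ye yS in eS.
rewrite big_mkcond [RHS]big_mkcond; apply: eq_bigr => y _; rewrite inE.
by case: (y \in S) => //=; case: (P y).
Qed.

Lemma group_sreach (A : nat -> Prop) K (P : position K) (lvl : 'I_K -> nat)
    (e : 'I_K) (S : {set 'I_K}) L :
  P e = None ->
  (forall y z, P y <> None -> P z <> None -> lvl y = lvl z -> y = z) ->
  (forall y, P y <> None -> lvl y < K.-1) ->
  (forall y, P y <> None -> sreach A (K - lvl y) (tval (P y))) ->
  (exists2 y0, y0 \in S & P y0 <> None /\ lvl y0 = L) ->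
  (forall y, y \in S -> P y <> None -> L <= lvl y) ->
  A (\sum_(y in S) tval (place P e y)) ->
  sreach A (K - L) (\sum_(y in S) tval (place P e y)).
Proof.
move=> Pe inj bnd sr [y0 y0S [y0o y0L]] Lmin hA K2 B2 d Bd hfree.
pose Z t := [set y in S | (P y != None) && (lvl y < t)].
have ZP : forall t y, y \in Z t -> [/\ y \in S, P y <> None & lvl y < t].
  by move=> t y; rewrite !inE => /andP [-> /andP [/eqP ? ->]].
have Zcard : forall t, #|Z t| <= t - L.
  move=> t; apply: card_levels.
    move=> y z /ZP [_ yo _] /ZP [_ zo _]; exact: inj.
  by move=> z /ZP [zS zo zt]; rewrite zt Lmin.
have LK : L < K.-1 by rewrite -y0L; apply: bnd.
have J : forall t, exists W G, [/\ reaches A B2 W, built B2 W G,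
    (L < t -> d \in G), #|G| = #|Z t| &
    set_sum W G = \sum_(y in Z t) tval (P y)].
  elim=> [|t [W [G [rW bW dG cG sG]]]].
    have Z0 : Z 0 = set0 by apply/setP => y; rewrite !inE ltn0 !andbF.
    exists B2, set0; split; rewrite ?Z0 ?cards0 //.
    - exact: reaches_refl.
    - exact: built0.
    - by rewrite /set_sum !big_set0.
  case: (pickP (fun y => (y \in S) && (P y != None) && (lvl y == t))) =>
    [y /andP [/andP [yS /eqP yo] /eqP yt] | none].
    have ZS : Z t.+1 = y |: Z t.
      apply/setP => z; rewrite !inE ltnS leq_eqVlt.
      case: (eqVneq z y) => [->|zy] /=; first by rewrite yS yt eqxx; case: eqP.
      case: (z \in S) => //=; case: eqP => //= zo.
      case: eqP => //= zt; case/negP: zy; apply/eqP; apply: inj => //; by rewrite zt yt.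
    have yZ : y \notin Z t by rewrite !inE yt ltnn !andbF.
    have Lt : L <= t by rewrite -yt Lmin.
    have tK : t < K.-1 by rewrite -yt; apply: bnd.
    have hf : K - t <= nfree W.
      have := built_free bW; have := Zcard t; rewrite cG; lia.
    have [d' [Wd' d'd]] : exists d', W d' = None /\ (t = L -> d' = d).
      case: (eqVneq t L) => [tL|tL].
        exists d; split => //.
        have G0 : G = set0.
          apply/eqP; rewrite -cards_eq0 cG; have := Zcard t; rewrite tL subnn.
          by rewrite leqn0.
        by case: bW => _ h2 _; rewrite h2 ?G0 ?inE.
      have : 0 < nfree W by apply: leq_trans hf; lia.
      by case/free_cell => d' Wd'; exists d'; split => // tL'; rewrite tL' eqxx in tL.
    have r2 : reaches A W (setp W d' (tval (P y))) by apply: (sr y yo K2 W d' Wd'); rewrite yt.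
    case: (built_add (tval (P y)) bW Wd') => bW' d'G sW'.
    exists (setp W d' (tval (P y))), (d' |: G); split => //.
    - exact: reaches_trans rW r2.
    - move=> Ltt; rewrite !inE; case: (eqVneq t L) => [tL|tL].
        by rewrite d'd // eqxx.
      by rewrite dG ?orbT //; lia.
    - by rewrite ZS !cardsU1 d'G yZ cG.
    - by rewrite sW' ZS /set_sum big_setU1 //= -sG.
  have ZS : Z t.+1 = Z t.
    apply/setP => z; rewrite !inE ltnS leq_eqVlt.
    case: (eqVneq (lvl z) t) => [zt|zt] //=.
    by have := none z; rewrite zt eqxx ltnn /= !andbT !andbF => ->.
  exists W, G; split; rewrite ?ZS //.
  move=> Lt; apply: dG; case: (eqVneq L t) => [Lt'|]; last by lia.
  by have := none y0; rewrite y0S y0L Lt' eqxx andbT; case: (P y0) y0o.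
case: (J K.-1) => W [G [rW bW dG cG sG]].
have Zall : Z K.-1 = [set y in S | P y != None].
  apply/setP => y; rewrite !inE; case: (y \in S) => //=.
  case: (eqVneq (P y) None) => //= yo; apply: bnd; exact/eqP.
rewrite Zall in cG sG.
have dG' : d \in G by apply: dG.
have B2G : forall z, z \in G -> B2 z = None by case: bW.
rewrite sum_place //.
case: (boolP (e \in S)) => eS.
  have hf : 0 < nfree W.
    have := built_free bW; have := Zcard K.-1; rewrite Zall -cG; lia.
  case: (free_cell hf) => d'' Wd''.
  case: (built_add 1 bW Wd'') => bW' d''G sW'.
  apply: (finish_merge (reaches_step_r rW (step_place _ Wd'')) _ bW').
  - move=> eq; have := congr1 (fun f : position K2 => f d'') eq.
    by rewrite ffunE eqxx; case: bW => _ h2 _; rewrite -h2 // Wd''.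
  - by rewrite !inE dG' orbT.
  - by rewrite sW' sG.
  - by move: hA; rewrite sum_place // eS.
apply: (finish_merge rW _ bW dG').
- move=> eq; case: bW => _ _ h3; apply: (h3 d dG'); by rewrite eq.
- by rewrite sG.
- by move: hA; rewrite sum_place // (negbTE eS).
Qed.


Definition Inv (A : nat -> Prop) K (P : position K) :=
  exists lvl : 'I_K -> nat,
  [/\ (forall y z, P y <> None -> P z <> None -> lvl y = lvl z -> y = z),
      (forall y, P y <> None -> lvl y < K),
      (forall y, P y <> None -> sreach A (K - lvl y) (tval (P y))) &
      (forall y, P y <> None -> A (tval (P y)))].

Definition rnk K (P : position K) (lvl : 'I_K -> nat) x :=
  #|[set y | (P y != None) && (lvl y < lvl x)]|.

Lemma rnk_le K (P : position K) lvl x :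
  (forall y z, P y <> None -> P z <> None -> lvl y = lvl z -> y = z) ->
  rnk P lvl x <= lvl x.
Proof.
move=> inj; rewrite -(subn0 (lvl x)); apply: card_levels.
  by move=> y z; rewrite !inE => /andP [/eqP yo _] /andP [/eqP zo _]; apply: inj.
by move=> z; rewrite inE => /andP [_ ->].
Qed.

Lemma rnk_lt K (P : position K) lvl x y :
  P x <> None -> lvl x < lvl y -> rnk P lvl x < rnk P lvl y.
Proof.
move=> xo lt; apply: proper_card; apply/properP; split.
  apply/subsetP => z; rewrite !inE => /andP [-> zl] /=.
  exact: ltn_trans zl lt.
exists x; rewrite !inE ?ltnn ?andbF // lt andbT; exact/eqP.
Qed.

Lemma rnk_bound K (P : position K) lvl x :
  P x <> None -> rnk P lvl x < #|[set y | P y != None]|.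
Proof.
move=> xo; apply: proper_card; apply/properP; split.
  by apply/subsetP => z; rewrite !inE => /andP [-> _].
by exists x; rewrite !inE ?ltnn ?andbF //; apply/eqP.
Qed.

Lemma rnk_inj K (P : position K) lvl y z :
  (forall y z, P y <> None -> P z <> None -> lvl y = lvl z -> y = z) ->
  P y <> None -> P z <> None -> rnk P lvl y = rnk P lvl z -> y = z.
Proof.
move=> inj yo zo e.
case: (ltngtP (lvl y) (lvl z)) => [lt|lt|eq]; last exact: inj.
  by move: (rnk_lt yo lt); rewrite e ltnn.
by move: (rnk_lt zo lt); rewrite e ltnn.
Qed.

Lemma Inv_compact (A : nat -> Prop) K (P : position K) : Inv A P ->
  exists lvl : 'I_K -> nat,
  [/\ (forall y z, P y <> None -> P z <> None -> lvl y = lvl z -> y = z),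
      (forall y, P y <> None -> lvl y < #|[set y | P y != None]|),
      (forall y, P y <> None -> sreach A (K - lvl y) (tval (P y))) &
      (forall y, P y <> None -> A (tval (P y)))].
Proof.
case=> lvl [inj bnd sr hA]; exists (rnk P lvl); split => //.
- by move=> y z yo zo; apply: rnk_inj.
- by move=> y yo; apply: rnk_bound.
- move=> y yo; apply: sreach_mono (sr y yo).
  by have := rnk_le y inj; lia.
Qed.

Lemma Inv_step (A : nat -> Prop) K (P' P : position K) :
  A 1 -> step A P' P -> Inv A P' -> Inv A P.
Proof.
move=> hA1 st IP'.
case: (Inv_compact IP') => lvl' [inj' bnd' sr' hA'].
case: (stepP st) => e [ms sD].
have sD0 := sD; case: sD0 => H1 H2 D H4 H5.
have NK : #|[set y | P' y != None]| <= K.-1.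
  have : #|[set y | P' y != None]| < #|[set: 'I_K]|.
    apply: proper_card; apply/properP; split; first exact: subsetT.
    by exists e; rewrite !inE ?H1.
  by rewrite cardsT card_ord; lia.
have bnd : forall y, P' y <> None -> lvl' y < K.-1.
  by move=> y yo; apply: leq_trans (bnd' y yo) NK.
have K0 : 0 < K by case: (e) => ? ?; lia.
pose Fb x y := (owner ms y == x) && (P' y != None).
pose lvl x := if [pick y | Fb x y] is Some y0
              then lvl' [arg min_(y < y0 | Fb x y) lvl' y] else K.-1.
have lvlS : forall x y0, Fb x y0 ->
    exists ym, [/\ Fb x ym, lvl x = lvl' ym &
                   forall y, Fb x y -> lvl' ym <= lvl' y].
  move=> x y0 Fy0; rewrite /lvl; case: pickP => [y1 Fy1|]; last by move=> h; rewrite h in Fy0.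
  case: arg_minnP => // ym Fym hm; by exists ym.
have lvlN : forall x, (forall y, Fb x y = false) -> lvl x = K.-1.
  by move=> x h; rewrite /lvl; case: pickP => // y; rewrite h.
have Pe : forall x, P x <> None -> (forall y, Fb x y = false) -> x = e.
  move=> x xo h.
  have ox := stepD_owner sD xo; have px := stepD_nonempty sD xo.
  move: (h x); rewrite /Fb ox eqxx /=; move: px; rewrite ffunE.
  by case: eqP => // _ px /negbFE/eqP px'.
have hAP : forall x, P x <> None -> A (tval (P x)).
  move=> x xo; case: (owner_cases x D) => [[m mm [xm _]]|[h _]].
    move: xo; rewrite (H4 x m mm xm); case: eqP => // _ _ /=.
    by case: (H2 m mm).
  move: xo; rewrite (H5 x h) ffunE; case: eqP => //= _ xo; exact: hA' x xo.
exists lvl; split => //.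
- move=> x x' xo x'o.
  case: (pickP (Fb x)) => [y Fy|nx]; case: (pickP (Fb x')) => [y' Fy'|nx'].
  + case: (lvlS x y Fy) => ym [Fym -> _]; case: (lvlS x' y' Fy') => ym' [Fym' -> _].
    move=> e'; case/andP: Fym => /eqP <- /eqP ymo; case/andP: Fym' => /eqP <- /eqP ym'o.
    by rewrite (inj' _ _ ymo ym'o e').
  + case: (lvlS x y Fy) => ym [Fym -> _]; rewrite lvlN //.
    case/andP: Fym => _ /eqP ymo; by have := bnd ym ymo; lia.
  + case: (lvlS x' y' Fy') => ym [Fym -> _]; rewrite lvlN //.
    case/andP: Fym => _ /eqP ymo; by have := bnd ym ymo; lia.
  + by move=> _; rewrite (Pe x xo nx) (Pe x' x'o nx').
- move=> x xo; case: (pickP (Fb x)) => [y Fy|nx].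
    case: (lvlS x y Fy) => ym [Fym -> _]; case/andP: Fym => _ /eqP ymo.
    by have := bnd ym ymo; lia.
  by rewrite lvlN //; lia.
- move=> x xo.
  have hval : tval (P x) = \sum_(y in [set y | owner ms y == x]) tval (place P' e y).
    by rewrite (stepD_fiber x sD); apply: eq_bigl => y; rewrite inE.
  case: (pickP (Fb x)) => [y Fy|nx].
    case: (lvlS x y Fy) => ym [Fym -> hm].
    rewrite hval; apply: (group_sreach H1 inj' bnd sr').
    + exists ym; first by case/andP: Fym => /eqP <-; rewrite inE.
      by case/andP: Fym => _ /eqP ymo.
    + by move=> y' y'S y'o; apply: hm; rewrite /Fb; rewrite inE in y'S; rewrite y'S; apply/eqP.
    + by rewrite -hval; apply: hAP.
  rewrite lvlN // hval sum_place //.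
  have -> : [set y in [set y | owner ms y == x] | P' y != None] = set0.
    by apply/setP => y; rewrite !inE; have := nx y; rewrite /Fb => ->.
  have xe := Pe x xo nx.
  rewrite /set_sum big_set0 addn0 inE -xe (stepD_owner sD xo) eqxx.
  by apply: sreach_one; lia.
Qed.


Lemma Inv_reach (A : nat -> Prop) K (P : position K) :
  A 1 -> reachable A P -> Inv A P.
Proof.
move=> hA1 [k [f [f0 fk fs]]]; rewrite -fk.
have: k <= k by [].
elim: {1 3}k => [|j IH] jk.
  rewrite f0; exists (fun _ => 0); split => y; rewrite ffunE //.
apply: Inv_step hA1 (fs j jk) (IH (ltnW jk)).
Qed.

Lemma build_all (A : nat -> Prop) K (T : position K) (lv : 'I_K -> nat) :
  (forall y z, T y <> None -> T z <> None -> lv y = lv z -> y = z) ->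
  (forall y, T y <> None -> lv y < K) ->
  (forall y, T y <> None -> sreach A (K - lv y) (tval (T y))) ->
  reaches A (init_pos K) T.
Proof.
move=> inj bnd sr.
pose Tt t : position K := [ffun x => if lv x < t then T x else None].
have TK : Tt K = T.
  apply/ffunP => x; rewrite ffunE; case: (eqVneq (T x) None) => [->|xo].
    by case: ifP.
  by rewrite bnd //; apply/eqP.
rewrite -TK; suff: forall t, reaches A (init_pos K) (Tt t) by apply.
elim=> [|t IH].
  have -> : Tt 0 = init_pos K by apply/ffunP => x; rewrite !ffunE.
  exact: reaches_refl.
case: (pickP (fun y => (T y != None) && (lv y == t))) => [y /andP [/eqP yo /eqP yt]|none].
  have -> : Tt t.+1 = setp (Tt t) y (tval (T y)).
    apply/ffunP => x; rewrite !ffunE ltnS leq_eqVlt.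
    case: (eqVneq x y) => [->|xy]; first by rewrite yt eqxx /=; case: (T y) yo.
    case: (eqVneq (lv x) t) => [xt|xt] //=.
    case: (eqVneq (T x) None) => [->|xo]; first by case: ifP.
    by case/negP: xy; apply/eqP; apply: inj => //; [exact/eqP | rewrite xt yt].
  apply: reaches_trans IH _; apply: (sr y yo); first by rewrite ffunE yt ltnn.
  have : #|[set x | Tt t x != None]| <= t.
    suff h : #|[set x | Tt t x != None]| <= t - 0 by rewrite subn0 in h.
    apply: card_levels.
      move=> a b; rewrite !inE !ffunE.
      by case: ifP => _ /eqP ao; case: ifP => _ /eqP bo //; apply: inj.
    by move=> z; rewrite inE ffunE; case: ifP => // ->.
  have := cardC [set x | Tt t x == None]; rewrite card_ord /nfree.
  have -> : #|[predC [set x | Tt t x == None]]| = #|[set x | Tt t x != None]|.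
    by apply: eq_card => x; rewrite !inE.
  rewrite yt; lia.
have -> : Tt t.+1 = Tt t.
  apply/ffunP => x; rewrite !ffunE ltnS leq_eqVlt.
  case: (eqVneq (lv x) t) => [xt|xt] //=.
  have := none x; rewrite xt eqxx andbT => /negbFE/eqP ->.
  by case: ifP.
exact: IH.
Qed.

Lemma insert_step (A : nat -> Prop) m (c : 'I_m.+1) v (Q R : position m) :
  step A Q R -> step A (insert_cell c v Q) (insert_cell c v R).
Proof.
move=> st; case: (stepP st) => e [ms [H1 H2 D H4 H5]].
have insL : forall (Q : position m) j, insert_cell c v Q (lift c j) = Q j.
  by move=> Q' j; rewrite ffunE liftK.
have insC : forall (Q : position m), insert_cell c v Q c = Some v.
  by move=> Q'; rewrite ffunE unlift_none.
have plc : place (insert_cell c v Q) (lift c e) = insert_cell c v (place Q e).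
  apply/ffunP => x; case: (eqVneq c x) => [<-|cx].
    by rewrite ffunE (negbTE (neq_lift c e)) !insC.
  case: (unlift_some cx) => j -> _.
  by rewrite ffunE !insL (inj_eq lift_inj) ffunE.
have sumL : forall (Q : position m) (S : {set 'I_m}),
    set_sum (insert_cell c v Q) (lift c @: S) = set_sum Q S.
  move=> Q' S; rewrite /set_sum big_imset /=; last by move=> a b _ _; apply: lift_inj.
  by apply: eq_bigr => j _; rewrite insL.
pose g (mm : {set 'I_m} * 'I_m) := (lift c @: mm.1, lift c mm.2).
apply/stepDP; exists (lift c e), (map g ms); split.
- by rewrite insL.
- move=> m' /mapP [mm mmi ->] /=; rewrite plc sumL.
  case: (H2 mm mmi) => h1 h2 h3; split => //; first exact: imset_f.
  by move=> x /imsetP [y ym ->]; rewrite insL; apply: h2.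
- move=> i j; rewrite size_map => il jl ij; rewrite !(nth_map (set0, e)) //=.
  have dj := D i j il jl ij; apply: mydisjP => x /imsetP [a am ->] /imsetP [b bm].
  move/lift_inj => ab; subst b.
  by move: (disjointFr dj am); rewrite bm.
- move=> x m' /mapP [mm mmi ->] /= /imsetP [y ym ->].
  by rewrite insL (H4 y mm mmi ym) plc sumL (inj_eq lift_inj).
- move=> x h; rewrite plc; case: (eqVneq c x) => [<-|cx]; first by rewrite !insC.
  case: (unlift_some cx) => j xe _; subst x; rewrite !insL; apply: H5 => mm mmi.
  apply/negP => jm; have := h (g mm) (map_f g mmi).
  by rewrite /= imset_f.

Qed.


Theorem lemma1 (A : nat -> Prop)
  (hA1 : A 1) (hApos : forall a, A a -> 0 < a)
  (m : nat) (P : position m.+1)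
  (hP : reachable A P) (hne : exists i, P i <> None) :
  exists (c : 'I_m.+1) (v : nat),
    P c = Some v /\
    reachable A (insert_cell c v (init_pos m)) /\
    exists (k : nat) (f : nat -> position m),
      [/\ f 0 = init_pos m,
          f k = delete_cell c P &
          forall i, i < k ->
            step A (f i) (f i.+1) /\
            step A (insert_cell c v (f i)) (insert_cell c v (f i.+1))].
Proof.
case: (Inv_reach hA1 hP) => lvl [inj bnd sr hA].
case: hne => i0 i0o.
pose c := [arg min_(x < i0 | P x != None) lvl x].
have [co cmin] : P c <> None /\ forall y, P y <> None -> lvl c <= lvl y.
  rewrite /c; case: arg_minnP; first exact/eqP.
  move=> x /eqP xo h; split => // y yo; apply: h; exact/eqP.
pose v := tval (P c).
have Pc : P c = Some v by rewrite /v; move: (co); case: (P c).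
pose rk := rnk P lvl.
have rkc : rk c = 0.
  apply/eqP; rewrite cards_eq0; apply/eqP/setP => y; rewrite !inE.
  apply/negbTE/nandP; case: (boolP (P y != None)) => [/eqP yo|]; last by left.
  by right; rewrite -leqNgt cmin.
have rk_sr : forall y, P y <> None -> sreach A (m.+1 - rk y) (tval (P y)).
  move=> y yo; apply: sreach_mono (sr y yo).
  by have := rnk_le y inj; rewrite /rk; lia.
have rk_pos : forall y, P y <> None -> y != c -> 0 < rk y.
  move=> y yo yc; rewrite -rkc; apply: rnk_lt (co) _.
  rewrite ltn_neqAle (cmin _ yo) andbT; apply/eqP => e.
  by move: yc; rewrite (inj c y co yo e) eqxx.
have rk_bnd : forall y, P y <> None -> rk y < m.+1.
  move=> y yo; apply: leq_trans (rnk_bound lvl yo) _.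
  by apply: leq_trans (max_card _) _; rewrite card_ord.
exists c, v; split => //; split.
  have -> : insert_cell c v (init_pos m) = setp (init_pos m.+1) c v.
    apply/ffunP => x; rewrite !ffunE; case: (eqVneq c x) => [<-|cx].
      by rewrite unlift_none ?eqxx.
    case: (unlift_some cx) => j -> ->; rewrite ffunE.
    by [] || rewrite eq_sym (negbTE (neq_lift c j)).
  apply: (rk_sr c co); first by rewrite ffunE.
  have -> : nfree (init_pos m.+1) = m.+1.
    rewrite /nfree; have -> : [set x | init_pos m.+1 x == None] = setT.
      by apply/setP => x; rewrite !inE ffunE.
    by rewrite cardsT card_ord.
  by rewrite rkc.
have bt : reaches A (init_pos m) (delete_cell c P).
  apply: (build_all (lv := fun j => (rk (lift c j)).-1)).
  - move=> y z; rewrite !ffunE => yo zo e.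
    have p1 : 0 < rk (lift c y) by apply: rk_pos (yo) _; rewrite eq_sym neq_lift.
    have p2 : 0 < rk (lift c z) by apply: rk_pos (zo) _; rewrite eq_sym neq_lift.
    apply: lift_inj; apply: (rnk_inj inj yo zo); rewrite -/rk; lia.
  - move=> y; rewrite ffunE => yo.
    have p : 0 < rk (lift c y) by apply: rk_pos (yo) _; rewrite eq_sym neq_lift.
    have := rk_bnd _ yo; lia.
  - move=> y; rewrite ffunE => yo.
    have p : 0 < rk (lift c y) by apply: rk_pos (yo) _; rewrite eq_sym neq_lift.
    have -> : m - (rk (lift c y)).-1 = m.+1 - rk (lift c y) by lia.
    exact: rk_sr.
case: bt => k [f [f0 fk fs]]; exists k, f; split => // i ik; split.
  exact: fs.
exact: insert_step (fs i ik).
Qed.
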